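(* Let $I$ be a nontrivial real interval, let $n\ge 2$ be an integer, and let $g\colon I^{(n)}\to I$ be a function. The following assertions are equivalent: (i) $g$ is $n$-associative (in the sense defined in the context); (ii) $g_1\circ g=g$, and $g(\mathbf{x}\,g(\mathbf{y})\,\mathbf{z})=g(\mathbf{x}'\,g(\mathbf{y}')\,\mathbf{z}')$ for all strings $\mathbf{x},\mathbf{y},\mathbf{z},\mathbf{x}',\mathbf{y}',\mathbf{z}'$ over $I$ such that $\mathbf{x}\mathbf{y}\mathbf{z},\mathbf{x}'\mathbf{y}'\mathbf{z}'\in I^{(n)}$, $\mathbf{y},\mathbf{y}'\in I^{(n)}$, and $\mathbf{x}\mathbf{y}\mathbf{z}=\mathbf{x}'\mathbf{y}'\mathbf{z}'$; (iii) $g(\mathbf{x}\,g(\mathbf{y})\,\mathbf{z})=g(\mathbf{x}\mathbf{y}\mathbf{z})$ for all strings $\mathbf{x},\mathbf{y},\mathbf{z}$ over $I$ such that $\mathbf{x}\mathbf{y}\mathbf{z}\in I^{(n)}$ and $\mathbf{y}\in I^{(n)}$; (iv) $g_1\circ g=g$, and $g(g(\mathbf{x}_1)\cdots g(\mathbf{x}_n))=g(\mathbf{x}_1\cdots\mathbf{x}_n)$ for all $\mathbf{x}_1,\dots,\mathbf{x}_n\in I^{(n)}$.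
   Context: Tuples in $I^m$ are regarded as strings of length $m$ over $I$; concatenation of strings is written by juxtaposition; $\varepsilon$ is the empty string and $I^0=\{\varepsilon\}$. Let $A_n=\{m\in\mathbb{N}: m\equiv 1 \pmod{n-1}\}$ and $I^{(n)}=\bigcup_{m\in A_n}I^m$. For $g\colon I^{(n)}\to I$, $g_m$ denotes the restriction of $g$ to $I^m$. A function $f\colon I^n\to I$ is associative if $f(\mathbf{x}\,f(\mathbf{y})\,\mathbf{z})=f(\mathbf{x}'\,f(\mathbf{y}')\,\mathbf{z}')$ whenever $\mathbf{x}\mathbf{y}\mathbf{z},\mathbf{x}'\mathbf{y}'\mathbf{z}'\in I^{2n-1}$, $\mathbf{y},\mathbf{y}'\in I^n$ and $\mathbf{x}\mathbf{y}\mathbf{z}=\mathbf{x}'\mathbf{y}'\mathbf{z}'$. A function $g\colon I^{(n)}\to I$ is called $n$-associative if (a) $g_n$ is associative; (b) for every $m\in A_n$ with $m>n$ and all $x_1,\dots,x_m\in I$, $g_m(x_1\cdots x_m)=g_n(g_n(\cdots g_n(g_n(x_1\cdots x_n)x_{n+1}\cdots x_{2n-1})\cdots)x_{m-n+2}\cdots x_m)$; and (c) $g_1\circ g=g$ and $g(\mathbf{x}\,g_1(y)\,\mathbf{z})=g(\mathbf{x}y\mathbf{z})$ for all strings $\mathbf{x},\mathbf{z}$ and $y\in I$ with $\mathbf{x}y\mathbf{z}\in I^{(n)}$. *)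

(* Defs.v *)
From HB Require Import structures.
From mathcomp Require Import all_boot all_order all_algebra.
From mathcomp Require Import reals.
Set Implicit Arguments. Unset Strict Implicit. Unset Printing Implicit Defensive.
Import Order.TTheory GRing.Theory Num.Theory.
Local Open Scope ring_scope.

(* Strings over I are sequences of reals all lying in the interval I;
   concatenation is ++, a single letter a is [:: a]. *)

Section Defs.
Variable R : realType.

(* A_n = { m in N (N = positive integers) : m = 1 mod (n-1) } *)
Definition inA (n m : nat) : bool :=
  (0 < m)%N && (m %% n.-1 == 1 %% n.-1)%N.

Definition strI (I : interval R) (s : seq R) : bool := all (fun a => a \in I) s.

Definition inIn (I : interval R) (n : nat) (s : seq R) : bool :=
  strI I s && inA n (size s).

Definition nontrivial_itv (I : interval R) : Prop :=
  exists a b : R, [/\ a \in I, b \in I & a < b].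

(* g : I^(n) -> I, modelled as a total function on seq R mapping I^(n) into I *)
Definition maps_into (I : interval R) (n : nat) (g : seq R -> R) : Prop :=
  forall s, inIn I n s -> g s \in I.

Definition gn_assoc (I : interval R) (n : nat) (g : seq R -> R) : Prop :=
  forall x y z x' y' z' : seq R,
    strI I (x ++ y ++ z) -> size (x ++ y ++ z) = (2 * n - 1)%N ->
    size y = n -> size y' = n ->
    x ++ y ++ z = x' ++ y' ++ z' ->
    g (x ++ g y :: z) = g (x' ++ g y' :: z').

(* g_n(g_n(... g_n(g_n(x1..xn) x_{n+1}..x_{2n-1}) ...) x_{m-n+2}..x_m) *)
Definition nested_gn (n : nat) (g : seq R -> R) (s : seq R) : R :=
  foldl (fun acc c => g (acc :: c)) (g (take n s))
    (reshape (nseq ((size s - n) %/ n.-1) n.-1) (drop n s)).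

Definition cond_b (I : interval R) (n : nat) (g : seq R -> R) : Prop :=
  forall s, strI I s -> inA n (size s) -> (n < size s)%N -> g s = nested_gn n g s.

Definition g1_idem (I : interval R) (n : nat) (g : seq R -> R) : Prop :=
  forall s, inIn I n s -> g [:: g s] = g s.

Definition cond_c (I : interval R) (n : nat) (g : seq R -> R) : Prop :=
  g1_idem I n g /\
  forall (x z : seq R) (y : R),
    inIn I n (x ++ y :: z) -> g (x ++ g [:: y] :: z) = g (x ++ y :: z).

Definition n_associative (I : interval R) (n : nat) (g : seq R -> R) : Prop :=
  [/\ gn_assoc I n g, cond_b I n g & cond_c I n g].

End Defs.

(* Main.v *)
Require Import Defs.
From HB Require Import structures.
From mathcomp Require Import all_boot all_order all_algebra.
From mathcomp Require Import reals.
From mathcomp Require Import zify.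
Import Order.TTheory GRing.Theory Num.Theory.
Module Helpers.
Set Implicit Arguments. Unset Strict Implicit.


Lemma inA_swap n k a c : inA n k -> inA n (a + k + c) = inA n (a + 1 + c).
Proof.
rewrite /inA => /andP[k0 /eqP km].
have -> : (0 < a + k + c)%N by lia.
have -> : (0 < a + 1 + c)%N by lia.
have -> : (a + k + c = k + (a + c))%N by lia.
have -> : (a + 1 + c = 1 + (a + c))%N by lia.
by rewrite /= -modnDml km modnDml.
Qed.

Lemma inA1 n : inA n 1.
Proof. by rewrite /inA /= eqxx. Qed.

Lemma inAn n : (0 < n)%N -> inA n n.
Proof.
rewrite /inA => n0; rewrite n0 /=.
case: n n0 => // n _ /=. rewrite -addn1 -modnDml modnn add0n //.
Qed.

Lemma inA_split n a b c : inA n (a + b + c) -> inA n b ->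
  (a + c = 0 \/ n.-1 <= a + c)%N.
Proof.
rewrite /inA => /andP[_ /eqP h] /andP[b0 /eqP hb].
have e : ((a + c) + b == 0 + b %[mod n.-1])%N.
  by rewrite add0n hb -h addnAC.
rewrite eqn_modDr mod0n in e.
case: (posnP (a + c)) => [->|p]; [by left|right].
case: (posnP n.-1) => [->|d0]; first by [].
by apply: dvdn_leq => //; rewrite /dvdn.
Qed.


Definition P3 (R : realType) (I : interval R) n (g : seq R -> R) :=
  forall x y z : seq R,
          inIn I n (x ++ y ++ z) -> inIn I n y ->
          g (x ++ g y :: z) = g (x ++ y ++ z).

Lemma strI_cat (R : realType) (I : interval R) s t :
  strI I (s ++ t) = strI I s && strI I t.
Proof. by rewrite /strI all_cat. Qed.

Lemma strI_cons (R : realType) (I : interval R) a t :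
  strI I (a :: t) = (a \in I) && strI I t.
Proof. by []. Qed.

Lemma iii_iv_gen (R : realType) (I : interval R) n (g : seq R -> R) :
  maps_into I n g -> P3 I n g ->
  forall xs p q, all (inIn I n) xs -> inIn I n (p ++ flatten xs ++ q) ->
  g (p ++ map g xs ++ q) = g (p ++ flatten xs ++ q).
Proof.
move=> hg h3; elim=> [//|x xs IH] p q /= /andP[hx hxs] hin.
have hx' := hx; move: hx' => /andP[sx ax].
have gxI : g x \in I by apply: hg.
move: hin; rewrite /inIn !strI_cat !size_cat => /andP[/and3P[sp /andP[_ sf] sq] hA].
rewrite -cat1s -!catA.
have -> : p ++ [:: g x] ++ map g xs ++ q = rcons p (g x) ++ map g xs ++ q.
  by rewrite -cats1 -catA.
rewrite IH //; last first.
  rewrite /inIn !strI_cat -cats1 !strI_cat sp sf sq /= gxI /=.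
  rewrite !size_cat /= -(inA_swap (size p) (size (flatten xs) + size q) ax).
  by move: hA; rewrite !addnA.
rewrite -cats1 -!catA /=.
apply: h3 => //.
by rewrite /inIn !strI_cat sp sx sf sq !size_cat /=; move: hA; rewrite !addnA.
Qed.

Lemma inA_flatten (R : realType) (I : interval R) n (xs : seq (seq R)) c :
  all (inIn I n) xs -> inA n (c + size (flatten xs)) = inA n (c + size xs).
Proof.
elim: xs c => [//|x xs IH] c /= /andP[/andP[_ ax] hxs].
rewrite size_cat addnA inA_swap // IH //; congr inA; lia.
Qed.

Lemma strI_flatten (R : realType) (I : interval R) n (xs : seq (seq R)) :
  all (inIn I n) xs -> strI I (flatten xs).
Proof.
elim: xs => [//|x xs IH] /= /andP[/andP[sx _] hxs].
by rewrite strI_cat sx IH.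
Qed.

Lemma iii_iv (R : realType) (I : interval R) n (g : seq R -> R) :
  (0 < n)%N -> maps_into I n g -> P3 I n g ->
  g1_idem I n g /\
       (forall xs : seq (seq R),
          size xs = n -> all (inIn I n) xs ->
          g (map g xs) = g (flatten xs)).
Proof.
move=> n0 hg h3; split.
  move=> s hs; have := h3 [::] s [::]; rewrite /= cats0; by apply.
move=> xs sz hxs.
have := @iii_iv_gen _ _ _ _ hg h3 xs [::] [::] hxs; rewrite /= !cats0; apply.
rewrite /inIn (strI_flatten hxs) /=.
by rewrite -[size _]add0n (inA_flatten _ hxs) add0n sz inAn.
Qed.

Lemma decomp (T : Type) (x z : seq T) d : (d <= size x + size z)%N ->
  exists L u v Rr, [/\ x = L ++ u, z = v ++ Rr & (size L + size Rr = d)%N].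
Proof.
move=> hd; case: (leqP d (size x)) => hx.
  exists (take d x), (drop d x), z, [::]; split; first by rewrite cat_take_drop.
    by rewrite cats0.
  by rewrite addn0 size_take; case: ltngtP hx => //= ->.
exists x, [::], (take (size z - (d - size x)) z), (drop (size z - (d - size x)) z).
split; first by rewrite cats0.
  by rewrite cat_take_drop.
rewrite size_drop; lia.
Qed.

Lemma inA_shift n m : (0 < n)%N -> (0 < m)%N -> inA n (m + n.-1) = inA n m.
Proof.
move=> n0 m0.
have := inA_swap (m.-1) 0 (inAn n0).
have -> : (m.-1 + n + 0 = m + n.-1)%N by lia.
have -> : (m.-1 + 1 + 0 = m)%N by lia.
by [].
Qed.

Lemma all_sing (R : realType) (I : interval R) n (L : seq R) :
  strI I L -> all (inIn I n) [seq [:: a] | a <- L].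
Proof.
elim: L => [//|a L IH] /= /andP[aI sL].
by rewrite IH // /inIn /strI /= aI inA1.
Qed.

Lemma iv_iii (R : realType) (I : interval R) n (g : seq R -> R) :
  (1 < n)%N -> maps_into I n g -> 
  g1_idem I n g /\
       (forall xs : seq (seq R),
          size xs = n -> all (inIn I n) xs ->
          g (map g xs) = g (flatten xs)) -> P3 I n g.
Proof.
move=> n1 hg [h1 h4].
suff H : forall k x y z, (size x + size z <= k)%N ->
  inIn I n (x ++ y ++ z) -> inIn I n y ->
  g (x ++ g y :: z) = g (x ++ y ++ z).
  by move=> x y z; apply: (H _ x y z (leqnn _)).
elim=> [|k IH] x y z hk hin hy.
  move: hk; rewrite leqn0 addn_eq0 !size_eq0 => /andP[/eqP -> /eqP ->].
  by rewrite /= cats0 h1.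
case: (posnP (size x + size z)) => hxz.
  move: hxz => /eqP; rewrite addn_eq0 !size_eq0 => /andP[/eqP -> /eqP ->].
  by rewrite /= cats0 h1.
have hy' := hy; move: hy' => /andP[sy ay].
have y0 : (0 < size y)%N by move: ay => /andP[].
move: hin => /andP[sxyz]; rewrite !size_cat addnA => axyz.
have [|le] := inA_split axyz ay; first by lia.
have [L [u [v [Rr [ex ez eLR]]]]] := decomp le.
move: sxyz; rewrite ex ez !strI_cat => /and3P[/andP[sL su] _ /andP[sv sR]].
have gyI : g y \in I by apply: hg.
set sing := fun s : seq R => [seq [:: a] | a <- s].
have E1 : forall w : seq R, L ++ u ++ w ++ v ++ Rr = flatten (sing L ++ (u ++ w ++ v) :: sing Rr).
  by move=> w; rewrite flatten_cat /= !flatten_seq1 -!catA.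
have muyv : inIn I n (u ++ y ++ v).
  rewrite /inIn !strI_cat su sy sv /= !size_cat -(inA_shift (n:=n)); [|lia|lia].
  move: axyz; rewrite ex ez !size_cat; congr inA; lia.
have mugv : inIn I n (u ++ g y :: v).
  rewrite /inIn !strI_cat su /= gyI sv /= size_cat /=.
  move: muyv => /andP[_]; rewrite !size_cat addnA inA_swap //; congr inA; lia.
have sz : forall w, size (sing L ++ w :: sing Rr) = n.
  by move=> w; rewrite size_cat /= !size_map; lia.
have al : forall w, inIn I n w -> all (inIn I n) (sing L ++ w :: sing Rr).
  by move=> w hw; rewrite all_cat /= !all_sing // hw.
rewrite -!catA (E1 y) (E1 [:: g y]) -!h4 ?sz ?al //.
have d0 : (0 < size L + size Rr)%N by rewrite eLR -ltnS prednK // ltnW.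
rewrite !map_cat /= (IH u y v) //.
move: hk; rewrite ex ez !size_cat; lia.
Qed.


Lemma inA_mul d m : inA d.+1 (m * d).+1.
Proof.
rewrite /inA /= -addn1 modnMDl.
by [].
Qed.

Lemma inA_dvd d a b : inA d.+1 (a + b) -> inA d.+1 b -> (d %| a)%N.
Proof.
rewrite /inA /= => /andP[_ /eqP h] /andP[b0 /eqP hb].
have e : (a + b == 0 + b %[mod d])%N by rewrite add0n hb -h.
by rewrite eqn_modDr mod0n in e.
Qed.

Lemma G1 (R : realType) (I : interval R) d (g : seq R -> R) :
  (0 < d)%N -> cond_b I d.+1 g ->
  forall k a t, a \in I -> strI I t -> size t = (k.+1 * d)%N ->
  g (a :: t) = foldl (fun acc c => g (acc :: c)) a (reshape (nseq k.+1 d) t).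
Proof.
move=> d0 hb [|k] a t aI st sz.
  by rewrite /= take_oversize // sz mul1n.
rewrite hb //; last first.
- by rewrite /= sz ltnS mulSn; lia.
- by rewrite /= sz inA_mul.
- by rewrite /strI /= aI.
rewrite /nested_gn /=.
have -> : ((size t).+1 - d.+1)%/ d = k.+1.
  by rewrite subSS sz mulSn addKn mulnK.
by [].
Qed.

Lemma Hc (R : realType) (I : interval R) d (g : seq R -> R) :
  (0 < d)%N -> maps_into I d.+1 g -> cond_b I d.+1 g ->
  forall s, inIn I d.+1 s -> (d.+1 < size s)%N ->
  g s = g (g (take d.+1 s) :: drop d.+1 s).
Proof.
move=> d0 hg hb s /andP[ss a_s] lt.
rewrite hb // /nested_gn.
have hdv : (d %| size s - d.+1)%N.
  by apply: (inA_dvd (b := d.+1)); [rewrite subnK // ltnW|exact: inAn].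
set m := (size s - d.+1)%N in hdv *.
have m0 : (0 < m)%N by rewrite /m subn_gt0.
move: (divnK hdv) => em.
case E: (m %/ d)%N => [|k]; first by move: em; rewrite E mul0n => em; rewrite -em in m0.
rewrite (G1 d0 hb (k := k)) //.
- apply: hg; rewrite /inIn.
  rewrite -{1}(cat_take_drop d.+1 s) /strI all_cat in ss.
  move/andP: ss => [st _]; apply/andP; split; first exact: st.
  rewrite size_take lt; exact: inAn.
- by rewrite -{1}(cat_take_drop d.+1 s) /strI all_cat in ss; case/andP: ss.
- by rewrite size_drop -/m -em E.
Qed.

Lemma Hswap (R : realType) (I : interval R) d (g : seq R -> R) :
  (0 < d)%N -> maps_into I d.+1 g -> cond_b I d.+1 g ->
  forall u u' r, size u = d.+1 -> size u' = d.+1 ->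
  inIn I d.+1 (u ++ r) -> inIn I d.+1 (u' ++ r) -> g u = g u' ->
  g (u ++ r) = g (u' ++ r).
Proof.
move=> d0 hg hb u u' [|a r] su su' h h' e; first by rewrite !cats0.
rewrite (Hc d0 hg hb h) ?(Hc d0 hg hb h') ?size_cat ?su ?su' /= ?addnS ?ltnS ?leq_addr //.
by rewrite !take_size_cat ?drop_size_cat // e.
Qed.

Lemma strI_take (R : realType) (I : interval R) s k : strI I s -> strI I (take k s).
Proof. by rewrite -{1}(cat_take_drop k s) strI_cat => /andP[]. Qed.

Lemma strI_drop (R : realType) (I : interval R) s k : strI I s -> strI I (drop k s).
Proof. by rewrite -{1}(cat_take_drop k s) strI_cat => /andP[]. Qed.

Lemma drop_cat_le (T : Type) k (s1 s2 : seq T) : (k <= size s1)%N ->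
  drop k (s1 ++ s2) = drop k s1 ++ s2.
Proof.
move=> h; rewrite -{1}(cat_take_drop k s1) -catA drop_size_cat //.
by rewrite size_takel.
Qed.


Ltac slia := repeat match goal with H : ?T |- _ => lazymatch T with
  | is_true (leq _ _) => fail | (@eq nat _ _) => fail | _ => clear H end end; lia.

Lemma Klem (R : realType) (I : interval R) d (g : seq R -> R) :
  (0 < d)%N -> maps_into I d.+1 g -> n_associative I d.+1 g ->
  forall N x y z, (size (x ++ y ++ z) <= N)%N -> size y = d.+1 ->
  inIn I d.+1 (x ++ y ++ z) -> g (x ++ g y :: z) = g (x ++ y ++ z).
Proof.
move=> d0 hg [ha hb [h1 hc]].
elim=> [|N IH] x y z hN hy hin.
  by move: hN; rewrite !size_cat hy addnS.
have [sxyz axyz] := andP hin.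
move: (sxyz); rewrite !strI_cat => /and3P[sx sy sz].
have yin : inIn I d.+1 y by rewrite /inIn sy hy inAn.
case: (posnP (size x + size z)) => h0.
  move: h0 => /eqP; rewrite addn_eq0 !size_eq0 => /andP[/eqP ex /eqP ez].
  by rewrite ex ez /= cats0 h1.
have := @inA_split d.+1 (size x) (size y) (size z).
rewrite -addnA -!size_cat => /(_ axyz); rewrite hy => /(_ (inAn (ltn0Sn d))).
rewrite !size_cat; case=> [|le]; first by slia.
have bigxyz : (d.+1 < size (x ++ y ++ z))%N by rewrite !size_cat hy; slia.
case: (leqP (size x) d) => hx.
- set z1 := take (d - size x) z; set r := drop (d - size x) z.
  have ez : z = z1 ++ r by rewrite cat_take_drop.
  have sz1 : size z1 = (d - size x)%N by rewrite size_takel //; slia.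
  set w := x ++ y ++ z1.
  have sw : size w = (2 * d.+1 - 1)%N by rewrite /w !size_cat sz1 hy; slia.
  have ew : x ++ y ++ z = w ++ r by rewrite ez /w -!catA.
  have sw' : strI I w by move: sxyz; rewrite ew strI_cat => /andP[].
  have sr : strI I r by move: sxyz; rewrite ew strI_cat => /andP[].
  have stk : size (take d.+1 w) = d.+1 by rewrite size_takel // sw; slia.
  have ass : g (x ++ g y :: z1) = g ([::] ++ g (take d.+1 w) :: drop d.+1 w).
    apply: ha => //; by rewrite /= cat_take_drop.
  have gyI : g y \in I by apply: hg.
  have gtI : g (take d.+1 w) \in I.
    by apply: hg; rewrite /inIn strI_take //= stk inAn.
  rewrite (Hc d0 hg hb hin bigxyz) ew takel_cat ?sw; last by slia.
  rewrite drop_cat_le ?sw; last by slia.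
  rewrite ez -cat_cons catA.
  apply: (@Hswap _ _ _ _ d0 hg hb _ (g (take d.+1 w) :: drop d.+1 w)) => //.
  + by rewrite size_cat /= sz1; slia.
  + by rewrite /= size_drop sw; slia.
  + rewrite /inIn !strI_cat sx /= gyI strI_take //= sr /=.
    have E : (size ((x ++ g y :: z1) ++ r) + d = size (x ++ y ++ z))%N.
      by rewrite ez !size_cat /= hy sz1; slia.
    by rewrite -(inA_shift (n := d.+1)) //= ?E // !size_cat /=; slia.
  + rewrite /inIn !strI_cat /= gtI strI_drop //= sr /=.
    have E : (size ((g (take d.+1 w) :: drop d.+1 w) ++ r) + d = size (x ++ y ++ z))%N.
      by rewrite ew !size_cat /= size_drop sw; slia.
    by rewrite -(inA_shift (n := d.+1)) //= ?E // !size_cat /=; slia.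
- set x1 := take d.+1 x; set x2 := drop d.+1 x.
  have sx1 : size x1 = d.+1 by rewrite size_takel.
  have sx2 : size x2 = (size x - d.+1)%N by rewrite size_drop.
  have gyI : g y \in I by apply: hg.
  have gx1I : g x1 \in I by apply: hg; rewrite /inIn strI_take //= sx1 inAn.
  have hin2 : inIn I d.+1 (x ++ g y :: z).
    rewrite /inIn !strI_cat sx /= gyI sz /=.
    have E : (size (x ++ g y :: z) + d = size (x ++ y ++ z))%N.
      by rewrite !size_cat /= hy; slia.
    by rewrite -(inA_shift (n := d.+1)) //= ?E // !size_cat /=; slia.
  rewrite (Hc d0 hg hb hin bigxyz) takel_cat // drop_cat_le //.
  rewrite (Hc d0 hg hb hin2) ?takel_cat ?drop_cat_le //; last first.
    by rewrite !size_cat /=; slia.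
  apply: (IH (g x1 :: x2) y z) => //.
    by move: hN; rewrite !size_cat /= sx2 hy; slia.
  rewrite /inIn /= gx1I /= !strI_cat strI_drop //= sy sz /=.
  have E : (size ((g x1 :: x2) ++ y ++ z) + d = size (x ++ y ++ z))%N.
    by rewrite !size_cat /= sx2 hy; slia.
  by rewrite -(inA_shift (n := d.+1)) //= ?E // !size_cat /=; slia.
Qed.

Lemma i_iii (R : realType) (I : interval R) d (g : seq R -> R) :
  (0 < d)%N -> maps_into I d.+1 g -> n_associative I d.+1 g -> P3 I d.+1 g.
Proof.
move=> d0 hg hA.
have [ha hb [h1 hc]] := hA.
suff H : forall N x y z, (size y <= N)%N -> inIn I d.+1 (x ++ y ++ z) -> inIn I d.+1 y ->
  g (x ++ g y :: z) = g (x ++ y ++ z).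
  by move=> x y z; apply: (H _ x y z (leqnn _)).
elim=> [|N IH] x y z hN hin hy; have [sy ay] := andP hy; have y0 : (0 < size y)%N by case/andP: ay.
  by move: hN; rewrite leqn0 => /eqP e; rewrite e in y0.
have [sxyz axyz] := andP hin.
move: (sxyz); rewrite !strI_cat => /and3P[sx _ sz].
have := @inA_split d.+1 (size y - 1) 1 0.
have -> : (size y - 1 + 1 + 0 = size y)%N by slia.
move=> /(_ ay (inA1 _)) [e1|le].
  have sy1 : size y = 1%N by slia.
  case: y sy1 hin hy {hN sy ay y0 e1 sxyz axyz} => [|y0 [|]] //= _ hin _.
  by apply: hc.
case: (ltngtP (size y) d.+1) => hyd.
- by move: hyd; rewrite ltnS leqNgt; case/negP; slia.
- set t := take d.+1 y; set q := drop d.+1 y.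
  have st : size t = d.+1 by rewrite size_takel // ltnW.
  have gtI : g t \in I by apply: hg; rewrite /inIn strI_take //= st inAn.
  rewrite (Hc d0 hg hb hy hyd) -/t -/q.
  have hy2 : inIn I d.+1 (g t :: q).
    rewrite /inIn /= gtI strI_drop //=.
    have E : (size (g t :: q) + d = size y)%N by rewrite /= size_drop; slia.
    by rewrite -(inA_shift (n := d.+1)) //= ?E.
  rewrite (IH x (g t :: q) z) //; first last.
  + rewrite /inIn !strI_cat sx /= gtI strI_drop // sz /=.
    have E : (size (x ++ (g t :: q) ++ z) + d = size (x ++ y ++ z))%N.
      by rewrite !size_cat /= size_drop; slia.
    by rewrite -(inA_shift (n := d.+1)) //= ?E // !size_cat /=; slia.
  + by rewrite /= size_drop; slia.
  have etq : t ++ q = y by rewrite /t /q cat_take_drop.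
  rewrite /= (Klem d0 hg hA (leqnn _) st) (catA t q z) etq //.
- exact: (Klem d0 hg hA (leqnn (size (x ++ y ++ z))) hyd hin).
Qed.

Lemma fold3 (R : realType) (I : interval R) d (g : seq R -> R) :
  (0 < d)%N -> maps_into I d.+1 g -> P3 I d.+1 g ->
  forall k a t, a \in I -> strI I t -> size t = (k.+1 * d)%N ->
  g (a :: t) = foldl (fun acc c => g (acc :: c)) a (reshape (nseq k.+1 d) t).
Proof.
move=> d0 hg h3; elim=> [|k IH] a t aI st sz.
  by rewrite /= take_oversize // sz mul1n.
have sd : size (take d t) = d by rewrite size_takel // sz; slia.
have hin1 : inIn I d.+1 (a :: take d t) by rewrite /inIn strI_cons aI strI_take //= sd inAn.
change (g (a :: t) = foldl (fun acc c => g (acc :: c)) (g (a :: take d t)) (reshape (nseq k.+1 d) (drop d t))).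
rewrite -IH //; last first.
- by rewrite size_drop sz; slia.
- exact: strI_drop.
- by apply: hg.
have := h3 [::] (a :: take d t) (drop d t); rewrite /= cat_take_drop => ->.
- by [].
- by rewrite /inIn strI_cons aI st /= sz inA_mul.
- by [].
Qed.

Lemma iii_i (R : realType) (I : interval R) d (g : seq R -> R) :
  (0 < d)%N -> maps_into I d.+1 g -> P3 I d.+1 g -> n_associative I d.+1 g.
Proof.
move=> d0 hg h3; split.
- move=> x y z x' y' z' sxyz sz hy hy' e.
  have h2 : inA d.+1 (size (x ++ y ++ z)).
    have -> : size (x ++ y ++ z) = (2 * d).+1 by rewrite sz; slia.
    exact: inA_mul.
  have i1 : inIn I d.+1 (x ++ y ++ z) by rewrite /inIn sxyz h2.
  have i2 : inIn I d.+1 (x' ++ y' ++ z') by rewrite /inIn -e sxyz h2.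
  have i3 : inIn I d.+1 y.
    by rewrite /inIn; move: sxyz; rewrite !strI_cat => /and3P[_ -> _]; rewrite hy inAn.
  have i4 : inIn I d.+1 y'.
    by rewrite /inIn; move: sxyz; rewrite e !strI_cat => /and3P[_ -> _]; rewrite hy' inAn.
  by rewrite h3 // e h3.
- move=> s ss a_s lt.
  rewrite /nested_gn.
  have hdv : (d %| size s - d.+1)%N.
    by apply: (inA_dvd (b := d.+1)); [rewrite subnK // ltnW|exact: inAn].
  set m := (size s - d.+1)%N in hdv *.
  have m0 : (0 < m)%N by rewrite /m subn_gt0.
  move: (divnK hdv) => em.
  case E: (m %/ d)%N => [|k]; first by move: em; rewrite E mul0n => em; rewrite -em in m0.
  rewrite -(fold3 d0 hg h3 (k := k)).
  + have := h3 [::] (take d.+1 s) (drop d.+1 s); rewrite /= cat_take_drop => -> //.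
      by rewrite /inIn ss a_s.
    by rewrite /inIn strI_take //= size_takel ?inAn // ltnW.
  + apply: hg; by rewrite /inIn strI_take //= size_takel ?inAn // ltnW.
  + exact: strI_drop.
  + by rewrite size_drop -/m -em E.
- split.
  + move=> s hs; have := h3 [::] s [::]; rewrite /= cats0; by apply.
  + move=> x z y hin; have := h3 x [:: y] z; rewrite /=; apply => //.
    move: hin => /andP[]; rewrite strI_cat => /andP[_ /andP[yI _]] _.
    by rewrite /inIn /strI /= yI inA1.
Qed.

End Helpers.
Import Helpers.

Local Open Scope ring_scope.

Theorem proposition2p5 (R : realType) (I : interval R) (n : nat)
  (g : seq R -> R) :
  nontrivial_itv I -> (2 <= n)%N -> maps_into I n g ->
  [<-> n_associative I n g;
       g1_idem I n g /\
       (forall x y z x' y' z' : seq R,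
          inIn I n (x ++ y ++ z) -> inIn I n (x' ++ y' ++ z') ->
          inIn I n y -> inIn I n y' ->
          x ++ y ++ z = x' ++ y' ++ z' ->
          g (x ++ g y :: z) = g (x' ++ g y' :: z'));
       (forall x y z : seq R,
          inIn I n (x ++ y ++ z) -> inIn I n y ->
          g (x ++ g y :: z) = g (x ++ y ++ z));
       g1_idem I n g /\
       (forall xs : seq (seq R),
          size xs = n -> all (inIn I n) xs ->
          g (map g xs) = g (flatten xs))].
Proof.
move=> _; case: n => [|d] //; rewrite ltnS => d0 hg.
tfae.
- move=> hA; have h3 := i_iii d0 hg hA.
  split; first exact: (iii_iv (ltn0Sn d) hg h3).1.
  move=> x y z x' y' z' i1 i2 i3 i4 e.
  by rewrite h3 // e h3.
- move=> [h1 h2] x y z hin hy.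
  rewrite (h2 x y z [::] (x ++ y ++ z) [::]) //= ?cats0 //.
  by rewrite h1.
- by move=> h3; apply: (iii_iv (ltn0Sn d) hg h3).
- by move=> h4; apply: (iii_i d0 hg); apply: (iv_iii _ hg h4).
Qed.
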